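(* Let $\mathfrak A$ be a countable linear ordering and $\alpha<\mathrm{FC}(\mathfrak A)$ an ordinal. Then (1) $\mathfrak A$ contains a scattered closed interval $I$ with $\mathrm{FC}(\mathfrak A\restriction I)=\alpha+1$; and (2) $\mathfrak A$ contains a scattered closed interval $I$ with $\mathrm{VD}_*(\mathfrak A\restriction I)=\alpha$.
   Context: A closed interval of $\mathfrak A$ is a set $[x,y]_{\mathfrak A}=\{z:x\le z\le y\}$ for $x\le y$. A linear ordering is scattered if $(\mathbb Q;<)$ does not embed into it. $\mathrm{FC}$-rank: a condensation is an equivalence relation whose classes are intervals, yielding the quotient ordering $\mathfrak A/{\sim}$; $\sim_0$ is equality, $x\sim_{\beta+1}y$ iff the closed interval between the $\sim_\beta$-classes of $x$ and $y$ in $\mathfrak A/{\sim_\beta}$ is finite, and at limits $\sim_\lambda=\bigcup_{\beta<\lambda}\sim_\beta$; $\mathrm{FC}(\mathfrak A)$ is the least $\alpha$ with $\sim_\beta=\sim_\alpha$ for all $\beta\ge\alpha$. $\mathcal{VD}_0=\{\mathbf 0,\mathbf 1\}$; for $\alpha>0$, $\mathcal{VD}_\alpha$ consists of all finite, $\omega$-, $\omega^*$- and $\zeta$-sums of elements of $\bigcup_{\beta<\alpha}\mathcal{VD}_\beta$; for countable scattered $\mathfrak B$, $\mathrm{VD}_*(\mathfrak B)$ is the least $\beta$ such that $\mathfrak B$ is a finite sum of elements of $\mathcal{VD}_\beta$. *)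

(* Defs.v *)
From HB Require Import structures.
From mathcomp Require Import all_boot all_order all_algebra.
From Stdlib Require List ProofIrrelevance.
Set Implicit Arguments. Unset Strict Implicit. Unset Printing Implicit Defensive.
Import Order.TTheory GRing.Theory Num.Theory.

Inductive Ord : Type :=
| OZ : Ord
| OS : Ord -> Ord
| OL : (nat -> Ord) -> Ord.      (* OL f = sup_n f n *)

Inductive ord_le : Ord -> Ord -> Prop :=
| ole_Z b : ord_le OZ b
| ole_S a b : ord_lt a b -> ord_le (OS a) b
| ole_L f b : (forall n, ord_le (f n) b) -> ord_le (OL f) b
with ord_lt : Ord -> Ord -> Prop :=
| olt_S a b : ord_le a b -> ord_lt a (OS b)
| olt_L a f n : ord_lt a (f n) -> ord_lt a (OL f).

Record LinOrd : Type := {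
  carrier :> Type;
  rlt : carrier -> carrier -> Prop;
  rlt_irr : forall x, ~ rlt x x;
  rlt_trans : forall x y z, rlt x y -> rlt y z -> rlt x z;
  rlt_total : forall x y, rlt x y \/ x = y \/ rlt y x }.

Definition rle (A : LinOrd) (x y : A) : Prop := x = y \/ rlt x y.

Definition countableLO (A : LinOrd) : Prop :=
  exists f : A -> nat, forall x y, f x = f y -> x = y.

Definition subLO (A : LinOrd) (P : A -> Prop) : LinOrd.
Proof.
  refine {| carrier := {x : A | P x};
            rlt := fun u v => rlt (proj1_sig u) (proj1_sig v) |}.
  - intros [x Hx]; apply rlt_irr.
  - intros [x Hx] [y Hy] [z Hz]; apply rlt_trans.
  - intros [x Hx] [y Hy]; simpl.
    destruct (rlt_total x y) as [H|[H|H]]; [left; exact H| |right; right; exact H].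
    right; left; subst y; f_equal; apply ProofIrrelevance.proof_irrelevance.
Defined.

Definition intervalLO (A : LinOrd) (x y : A) : LinOrd :=
  subLO (fun z => rle x z /\ rle z y).

Definition scattered (A : LinOrd) : Prop :=
  ~ exists f : rat -> A, forall p q : rat, (p < q)%R -> rlt (f p) (f q).

Definition between (A : LinOrd) (x y z : A) : Prop :=
  (rle x z /\ rle z y) \/ (rle y z /\ rle z x).

(* sim A b x y  <->  x ~_b y.
   Successor: the closed interval between the ~_b-classes of x and y in A/~_b
   is finite, i.e. the points between x and y meet only finitely many
   ~_b-classes. *)
Fixpoint sim (A : LinOrd) (a : Ord) : A -> A -> Prop :=
  match a with
  | OZ => fun x y => x = y
  | OS b => fun x y => exists l : list A,
        forall z, between x y z -> exists w, List.In w l /\ sim b z w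
  | OL f => fun x y => exists n, sim (f n) x y
  end.

Definition stabilizes (A : LinOrd) (a : Ord) : Prop :=
  forall b, ord_le a b -> forall x y : A, sim b x y <-> sim a x y.

Definition isFC (A : LinOrd) (a : Ord) : Prop :=
  stabilizes A a /\ forall d, stabilizes A d -> ord_le a d.

Inductive SumKind : Type := KFin (n : nat) | KOmega | KOmegaStar | KZeta.

Definition idx (k : SumKind) : Type :=
  match k with
  | KFin n => 'I_n
  | KOmega => nat
  | KOmegaStar => nat
  | KZeta => int
  end.

Definition idx_lt (k : SumKind) : idx k -> idx k -> Prop :=
  match k as k0 return idx k0 -> idx k0 -> Prop with
  | KFin n => fun i j => (nat_of_ord i < nat_of_ord j)%N
  | KOmega => fun i j => (i < j)%N
  | KOmegaStar => fun i j => (j < i)%N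
  | KZeta => fun i j => (i < j)%R
  end.

Definition fiber (X : LinOrd) (I : Type) (g : X -> I) (i : I) : LinOrd :=
  subLO (fun x => g x = i).

Definition IsSum (k : SumKind) (X : LinOrd) (P : LinOrd -> Prop) : Prop :=
  exists g : X -> idx k,
    (forall x y, rlt x y -> g x = g y \/ idx_lt (g x) (g y)) /\
    (forall i, P (fiber g i)).

(* VD a X  <->  X belongs to VD_a (up to isomorphism) *)
Inductive VD : Ord -> LinOrd -> Prop :=
| VD_base a (X : LinOrd) :
    ord_le a OZ -> (forall x y : X, x = y) -> VD a X
| VD_sum a (X : LinOrd) (k : SumKind) (g : X -> idx k) :
    ord_lt OZ a ->
    (forall x y, rlt x y -> g x = g y \/ idx_lt (g x) (g y)) ->
    (forall i, exists b, ord_lt b a /\ VD b (fiber g i)) ->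
    VD a X.

Definition finsumVD (b : Ord) (B : LinOrd) : Prop :=
  exists n, IsSum (KFin n) B (VD b).

Definition isVDstar (B : LinOrd) (a : Ord) : Prop :=
  finsumVD a B /\ forall d, finsumVD d B -> ord_le a d.

(* Main.v *)
Require Import Defs.
From HB Require Import structures.
From mathcomp Require Import all_boot all_order all_algebra zify lra.
From Stdlib Require List ProofIrrelevance ClassicalEpsilon.
From Stdlib Require Import Classical.
Set Implicit Arguments. Unset Strict Implicit. Unset Printing Implicit Defensive.
Import Order.TTheory GRing.Theory Num.Theory.


Lemma le_S_inv a b : ord_le (OS a) b -> ord_lt a b.
Proof. intro H; inversion H; auto. Qed.
Lemma le_L_inv f b : ord_le (OL f) b -> forall n, ord_le (f n) b.
Proof. intro H; inversion H; auto. Qed.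
Lemma lt_S_inv a b : ord_lt a (OS b) -> ord_le a b.
Proof. intro H; inversion H; auto. Qed.
Lemma lt_L_inv a f : ord_lt a (OL f) -> exists n, ord_lt a (f n).
Proof. intro H; inversion H; eauto. Qed.
Lemma lt_Z_inv a : ~ ord_lt a OZ.
Proof. intro H; inversion H. Qed.

Lemma trans12 c (T3 : forall a b, ord_le a b -> ord_lt b c -> ord_lt a c) :
  (forall b a, ord_lt a b -> ord_le b c -> ord_lt a c) /\
  (forall a b, ord_le a b -> ord_le b c -> ord_le a c).
Proof.
assert (T2 : forall b a, ord_lt a b -> ord_le b c -> ord_lt a c).
{ induction b as [|b IHb|g IHg]; intros a H1 H2.
  - exfalso; exact (lt_Z_inv H1).
  - exact (T3 _ _ (lt_S_inv H1) (le_S_inv H2)).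
  - destruct (lt_L_inv H1) as [n Hn]. exact (IHg n a Hn (le_L_inv H2 n)). }
split; [exact T2|].
induction a as [|a IHa|g IHg]; intros b H1 H2.
- constructor.
- constructor. exact (T2 _ _ (le_S_inv H1) H2).
- constructor. intro n. exact (IHg n b (le_L_inv H1 n) H2).
Qed.

Lemma ord_trans_all c : forall a b,
  (ord_le a b -> ord_le b c -> ord_le a c) /\
  (ord_lt a b -> ord_le b c -> ord_lt a c) /\
  (ord_le a b -> ord_lt b c -> ord_lt a c).
Proof.
induction c as [|c IH|f IH].
- assert (T3 : forall a b, ord_le a b -> ord_lt b OZ -> ord_lt a OZ).
  { intros a b _ H; exfalso; exact (lt_Z_inv H). }
  destruct (trans12 T3) as [T2 T1]. intros a b; split; [|split]; eauto.
- assert (T3 : forall a b, ord_le a b -> ord_lt b (OS c) -> ord_lt a (OS c)).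
  { intros a b H1 H2. constructor. exact ((proj1 (IH a b)) H1 (lt_S_inv H2)). }
  destruct (trans12 T3) as [T2 T1]. intros a b; split; [|split]; eauto.
- assert (T3 : forall a b, ord_le a b -> ord_lt b (OL f) -> ord_lt a (OL f)).
  { intros a b H1 H2. destruct (lt_L_inv H2) as [n Hn].
    apply olt_L with n. exact (proj2 (proj2 (IH n a b)) H1 Hn). }
  destruct (trans12 T3) as [T2 T1]. intros a b; split; [|split]; eauto.
Qed.

Lemma ole_trans a b c : ord_le a b -> ord_le b c -> ord_le a c.
Proof. exact (proj1 (ord_trans_all c a b)). Qed.
Lemma olt_le_trans a b c : ord_lt a b -> ord_le b c -> ord_lt a c.
Proof. exact (proj1 (proj2 (ord_trans_all c a b))). Qed.
Lemma ole_lt_trans a b c : ord_le a b -> ord_lt b c -> ord_lt a c.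
Proof. exact (proj2 (proj2 (ord_trans_all c a b))). Qed.

Lemma ole_OL a f n : ord_le a (f n) -> ord_le a (OL f).
Proof.
revert f n; induction a as [|a IHa|g IHg]; intros f n H.
- constructor.
- constructor. apply olt_L with n. exact (le_S_inv H).
- constructor. intro m. exact (IHg m f n (le_L_inv H m)).
Qed.

Lemma ole_refl a : ord_le a a.
Proof.
induction a as [|a IHa|g IHg].
- constructor.
- constructor. constructor. exact IHa.
- constructor. intro n. apply ole_OL with n. exact (IHg n).
Qed.

Lemma ole_succ b : ord_le b (OS b).
Proof.
induction b as [|b IHb|g IHg].
- constructor.
- constructor. constructor. exact IHb.
- constructor. intro n. apply ole_trans with (OS (g n)); [exact (IHg n)|].
  constructor. constructor. apply ole_OL with n. apply ole_refl.
Qed.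

Lemma olt_le a b : ord_lt a b -> ord_le a b.
Proof.
revert a; induction b as [|b IHb|g IHg]; intros a H.
- exfalso; exact (lt_Z_inv H).
- apply ole_trans with b; [exact (lt_S_inv H)|apply ole_succ].
- destruct (lt_L_inv H) as [n Hn]. apply ole_OL with n. exact (IHg n a Hn).
Qed.

Lemma olt_irrefl a : ~ ord_lt a a.
Proof.
induction a as [|a IHa|g IHg]; intro H.
- exact (lt_Z_inv H).
- apply IHa. exact (le_S_inv (lt_S_inv H)).
- destruct (lt_L_inv H) as [n Hn]. apply (IHg n).
  apply ole_lt_trans with (OL g); [apply ole_OL with n; apply ole_refl|exact Hn].
Qed.

Lemma lt0_or_le0 b : ord_lt OZ b \/ ord_le b OZ.
Proof.
induction b as [|b IHb|g IHg].
- right; constructor.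
- left; constructor; constructor.
- destruct (classic (exists n, ord_lt OZ (g n))) as [[n Hn]|Hn].
  + left; apply olt_L with n; exact Hn.
  + right; constructor; intro n. destruct (IHg n) as [H|H]; [exfalso; eauto|exact H].
Qed.

Lemma ord_total_aux a : forall b,
  (ord_le a b \/ ord_lt b a) /\ (ord_lt a b \/ ord_le b a).
Proof.
induction a as [|a IHa|f IHf]; intro b.
- split; [left; constructor|exact (lt0_or_le0 b)].
- split.
  + destruct (proj2 (IHa b)) as [H|H]; [left; constructor; exact H|right; constructor; exact H].
  + induction b as [|b IHb|g IHg].
    * right; constructor.
    * destruct (proj2 (IHa b)) as [H|H].
      -- left; constructor; constructor; exact H.
      -- right; constructor; constructor; exact H.
    * destruct (classic (exists n, ord_lt (OS a) (g n))) as [[n Hn]|Hn].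
      -- left; apply olt_L with n; exact Hn.
      -- right; constructor; intro n. destruct (IHg n) as [H|H]; [exfalso; eauto|exact H].
- split.
  + destruct (classic (forall n, ord_le (f n) b)) as [H|H].
    * left; constructor; exact H.
    * apply not_all_ex_not in H. destruct H as [n Hn].
      destruct (proj1 (IHf n b)) as [H|H]; [contradiction|].
      right; apply olt_L with n; exact H.
  + induction b as [|b IHb|g IHg].
    * right; constructor.
    * destruct (classic (forall n, ord_le (f n) b)) as [H|H].
      -- left; constructor; constructor; exact H.
      -- apply not_all_ex_not in H. destruct H as [n Hn].
         destruct (proj1 (IHf n b)) as [H|H]; [contradiction|].
         right; constructor; apply olt_L with n; exact H.
    * destruct (classic (exists n, ord_lt (OL f) (g n))) as [[n Hn]|Hn].
      -- left; apply olt_L with n; exact Hn.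
      -- right; constructor; intro n. destruct (IHg n) as [H|H]; [exfalso; eauto|exact H].
Qed.

Lemma ord_total a b : ord_le a b \/ ord_lt b a.
Proof. exact (proj1 (ord_total_aux a b)). Qed.

Section Ord.
Variable A : LinOrd.
Implicit Types x y z t u v w : A.

Lemma rle_refl x : rle x x.
Proof. left; reflexivity. Qed.
Lemma rle_trans x y z : rle x y -> rle y z -> rle x z.
Proof.
intros [->|H1] [<-|H2]; try (right; assumption); try (left; reflexivity).
right; exact (rlt_trans H1 H2).
Qed.
Lemma rle_total x y : rle x y \/ rle y x.
Proof.
destruct (rlt_total x y) as [H|[H|H]]; [left; right; exact H|left; left; exact H|right; right; exact H].
Qed.
Lemma rle_antisym x y : rle x y -> rle y x -> x = y.
Proof.
intros [H1|H1] [H2|H2]; auto. exfalso; exact (rlt_irr (rlt_trans H1 H2)).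
Qed.
Lemma rlt_rle x y : rlt x y -> rle x y.
Proof. right; exact H. Qed.
Lemma rlt_nle x y : rlt x y -> rle y x -> False.
Proof. intros H [<-|H2]; [exact (rlt_irr H)|exact (rlt_irr (rlt_trans H H2))]. Qed.
Lemma nrle_lt x y : ~ rle x y -> rlt y x.
Proof.
intro H. destruct (rlt_total x y) as [H1|[H1|H1]]; auto; exfalso; apply H; [right|left]; assumption.
Qed.

Lemma between_sym x y z : between x y z -> between y x z.
Proof. unfold between; tauto. Qed.
Lemma between_norm x y z : rle x y -> between x y z -> rle x z /\ rle z y.
Proof.
intros Hxy [H|[H1 H2]]; [exact H|split].
- exact (rle_trans Hxy H1).
- exact (rle_trans H2 Hxy).
Qed.
Lemma between_l x y : between x y x.
Proof. destruct (rle_total x y); [left|right]; split; auto using rle_refl. Qed.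
Lemma between_r x y : between x y y.
Proof. destruct (rle_total x y); [left|right]; split; auto using rle_refl. Qed.
Lemma between_xx x z : between x x z -> z = x.
Proof. intros [[H1 H2]|[H1 H2]]; apply rle_antisym; auto. Qed.

Lemma between_sub x y u v t :
  between x y u -> between x y v -> between u v t -> between x y t.
Proof.
destruct (rle_total x y) as [Hxy|Hxy].
- intros Hu Hv Ht. apply between_norm in Hu; auto. apply between_norm in Hv; auto.
  destruct Hu as [Hu1 Hu2], Hv as [Hv1 Hv2]. left.
  destruct Ht as [[H1 H2]|[H1 H2]]; split; eauto using rle_trans.
- intros Hu Hv Ht. apply between_sym in Hu, Hv. apply between_sym.
  apply between_norm in Hu; auto. apply between_norm in Hv; auto.
  destruct Hu as [Hu1 Hu2], Hv as [Hv1 Hv2]. left.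
  destruct Ht as [[H1 H2]|[H1 H2]]; split; eauto using rle_trans.
Qed.

Lemma between_split x y z t : between x z t -> between x y t \/ between y z t.
Proof.
intros Ht. destruct (rle_total t y) as [Hty|Hyt].
- destruct Ht as [[H1 H2]|[H1 H2]].
  + left; left; split; auto.
  + right; right; split; auto.
- destruct Ht as [[H1 H2]|[H1 H2]].
  + right; left; split; auto.
  + left; right; split; auto.
Qed.

Lemma between_mid c u v t : between c u t -> between c v u -> between t v u.
Proof.
intros Ht Hu. destruct (rle_total c v) as [Hcv|Hvc].
- apply between_norm in Hu; auto. destruct Hu as [H1 H2].
  apply between_norm in Ht; auto. destruct Ht as [H3 H4]. left; split; auto.
- apply between_sym in Hu. apply between_norm in Hu; auto. destruct Hu as [H1 H2].
  apply between_sym in Ht. apply between_norm in Ht; auto. destruct Ht as [H3 H4].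
  right; split; auto.
Qed.

Lemma sim_refl b x : @sim A b x x.
Proof.
revert x; induction b as [|b IH|f IH]; intro x; simpl.
- reflexivity.
- exists (x :: nil). intros z Hz. apply between_xx in Hz. subst z.
  exists x; split; [left; reflexivity|apply IH].
- exists 0%N. apply IH.
Qed.

Lemma sim_sym b x y : @sim A b x y -> @sim A b y x.
Proof.
revert x y; induction b as [|b IH|f IH]; intros x y; simpl.
- intro; symmetry; assumption.
- intros [l Hl]; exists l; intros z Hz; apply Hl; apply between_sym; exact Hz.
- intros [n Hn]; exists n; apply IH; exact Hn.
Qed.

Lemma sim_conv b x y u v : @sim A b x y -> between x y u -> between x y v -> @sim A b u v.
Proof.
revert x y u v; induction b as [|b IH|f IH]; intros x y u v; simpl.
- intros -> Hu Hv. apply between_xx in Hu; apply between_xx in Hv. congruence.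
- intros [l Hl] Hu Hv; exists l; intros z Hz; apply Hl. exact (between_sub Hu Hv Hz).
- intros [n Hn] Hu Hv; exists n; exact (IH n _ _ _ _ Hn Hu Hv).
Qed.

Lemma sim_mono_S a b x y : (forall x y, @sim A a x y -> @sim A b x y) ->
  @sim A (OS a) x y -> @sim A (OS b) x y.
Proof.
intros Hab [l Hl]. exists l. intros z Hz. destruct (Hl z Hz) as [w [Hw Hs]].
exists w; split; auto.
Qed.

Scheme le_mut := Induction for ord_le Sort Prop
with lt_mut := Induction for ord_lt Sort Prop.

Lemma sim_mono_all : forall a b, ord_le a b -> forall x y, @sim A a x y -> @sim A b x y.
Proof.
intros a0 b0 H0.
induction H0 using le_mut with
  (P0 := fun a b _ => forall x y : A, @sim A (OS a) x y -> @sim A b x y).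
- intros x y H; simpl in H; subst; apply sim_refl.
- intros x y Hs; exact (IHord_le x y Hs).
- intros x y [n Hn]. match goal with IH : forall n x y, _ -> _ |- _ => exact (IH n x y Hn) end.
- intros x y Hs. match goal with IH : forall x y, _ -> _ |- _ => exact (sim_mono_S IH Hs) end.
- intros x y Hs. exists n. match goal with IH : forall x y, _ -> _ |- _ => exact (IH x y Hs) end.
Qed.

Lemma sim_le a b x y : ord_le a b -> @sim A a x y -> @sim A b x y.
Proof. intros H Hs; exact (sim_mono_all H Hs). Qed.

Lemma sim_trans b x y z : @sim A b x y -> @sim A b y z -> @sim A b x z.
Proof.
revert x y z; induction b as [|b IH|f IH]; intros x y z; simpl.
- intros -> ->; reflexivity.
- intros [l1 H1] [l2 H2]. exists (l1 ++ l2)%list. intros t Ht.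
  destruct (between_split y Ht) as [H|H].
  + destruct (H1 t H) as [w [Hw Hs]]. exists w; split; auto. apply List.in_or_app; left; auto.
  + destruct (H2 t H) as [w [Hw Hs]]. exists w; split; auto. apply List.in_or_app; right; auto.
- intros [n Hn] [m Hm]. destruct (ord_total (f n) (f m)) as [H|H].
  + exists m. apply IH with y; auto. exact (sim_le H Hn).
  + exists n. apply IH with y; auto. exact (sim_le (olt_le H) Hm).
Qed.

End Ord.

Section Sub.
Variable A : LinOrd.
Variable P : A -> Prop.
Definition convex := forall x y z : A, P x -> P y -> between x y z -> P z.

Lemma sig_eq (u v : subLO P) : proj1_sig u = proj1_sig v -> u = v.
Proof.
destruct u as [x Hx], v as [y Hy]; simpl; intros ->; f_equal;
apply ProofIrrelevance.proof_irrelevance.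
Qed.

Lemma rle_sub (u v : subLO P) : rle u v <-> rle (proj1_sig u) (proj1_sig v).
Proof.
unfold rle; simpl; split.
- intros [->|H]; [left; reflexivity|right; exact H].
- intros [H|H]; [left; apply sig_eq; exact H|right; exact H].
Qed.

Lemma between_sub_iff (u v t : subLO P) :
  between u v t <-> between (proj1_sig u) (proj1_sig v) (proj1_sig t).
Proof. unfold between; rewrite !rle_sub; tauto. Qed.

Lemma sim_sub_down b (u v : subLO P) :
  @sim A b (proj1_sig u) (proj1_sig v) -> @sim (subLO P) b u v.
Proof.
revert u v; induction b as [|b IH|f IH]; intros u v; simpl.
- apply sig_eq.
- intros [l Hl].
  assert (Hl' : exists l' : list (subLO P), forall w, List.In w l ->
             (exists t : subLO P, @sim A b (proj1_sig t) w) ->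
             exists t', List.In t' l' /\ @sim A b (proj1_sig t') w).
  { clear Hl. induction l as [|w0 l IHl].
    - exists nil; intros w [].
    - destruct IHl as [l' Hl'].
      destruct (classic (exists t : subLO P, @sim A b (proj1_sig t) w0)) as [[t Ht]|Hn].
      + exists (t :: l'). intros w [<-|Hw] Hex.
        * exists t; split; [left; reflexivity|exact Ht].
        * destruct (Hl' w Hw Hex) as [t' [H1 H2]]. exists t'; split; [right; exact H1|exact H2].
      + exists l'. intros w [<-|Hw] Hex; [contradiction|exact (Hl' w Hw Hex)]. }
  destruct Hl' as [l' Hl']. exists l'. intros z Hz.
  apply between_sub_iff in Hz. destruct (Hl _ Hz) as [w [Hw Hs]].
  destruct (Hl' w Hw (ex_intro _ z Hs)) as [t' [Ht' Hs']].
  exists t'; split; [exact Ht'|]. apply IH.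
  exact (sim_trans Hs (sim_sym Hs')).
- intros [n Hn]; exists n; apply IH; exact Hn.
Qed.

Lemma sim_sub_up (Hc : convex) b (u v : subLO P) :
  @sim (subLO P) b u v -> @sim A b (proj1_sig u) (proj1_sig v).
Proof.
revert u v; induction b as [|b IH|f IH]; intros u v; simpl.
- intros ->; reflexivity.
- intros [l Hl]. exists (List.map (@proj1_sig _ _) l). intros z Hz.
  assert (Pz : P z) by exact (Hc _ _ _ (proj2_sig u) (proj2_sig v) Hz).
  pose (z' := exist P z Pz : subLO P).
  assert (Hz' : between u v z') by (apply between_sub_iff; exact Hz).
  destruct (Hl z' Hz') as [w [Hw Hs]].
  exists (proj1_sig w); split; [apply List.in_map; exact Hw|].
  exact (IH z' w Hs).
- intros [n Hn]; exists n; apply IH; exact Hn.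
Qed.
End Sub.

Lemma interval_convex (A : LinOrd) (x y : A) : convex (fun z => rle x z /\ rle z y).
Proof.
intros a b t [Ha1 Ha2] [Hb1 Hb2] Ht.
assert (Hxy : rle x y) by exact (rle_trans Ha1 Ha2).
assert (Ha : between x y a) by (left; split; auto).
assert (Hb : between x y b) by (left; split; auto).
exact (between_norm Hxy (between_sub Ha Hb Ht)).
Qed.

Definition rank (k : SumKind) : idx k -> int :=
  match k as k0 return idx k0 -> int with
  | KFin n => fun i => Posz (nat_of_ord i)
  | KOmega => fun i => Posz i
  | KOmegaStar => fun i => (- Posz i)%R
  | KZeta => fun i => i
  end.

Lemma rank_lt k (i j : idx k) : idx_lt i j -> (rank i < rank j)%R.
Proof. destruct k; simpl in *; intros; lia. Qed.

Lemma rank_inj k (i j : idx k) : rank i = rank j -> i = j.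
Proof.
destruct k; simpl in *; intros H; try lia.
apply val_inj; simpl; lia.
Qed.

Definition mono (X : LinOrd) k (g : X -> idx k) :=
  forall x y, rlt x y -> g x = g y \/ idx_lt (g x) (g y).

Lemma mono_rle (X : LinOrd) k (g : X -> idx k) (Hg : mono g) x y :
  rle x y -> (rank (g x) <= rank (g y))%R.
Proof.
intros [->|H]; [lia|]. destruct (Hg _ _ H) as [E|E]; [rewrite E; lia|].
have := rank_lt E; lia.
Qed.

Lemma fiber_convex (X : LinOrd) k (g : X -> idx k) (Hg : mono g) i :
  convex (fun x => g x = i).
Proof.
intros a b t Ha Hb Ht. subst i.
assert (E : rank (g t) = rank (g a)).
{ destruct Ht as [[H1 H2]|[H1 H2]].
  - have := mono_rle Hg H1; have := mono_rle Hg H2; rewrite Hb; lia.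
  - have := mono_rle Hg H1; have := mono_rle Hg H2; rewrite Hb; lia. }
exact (rank_inj E).
Qed.

Lemma sum_sim (X : LinOrd) (I : Type) (g : X -> I) (u v : X) (L : list I) (e : Ord) :
  (forall z, between u v z -> List.In (g z) L) ->
  (forall s t, List.In (g s) L -> g s = g t -> @sim X e s t) -> @sim X (OS e) u v.
Proof.
intros H1 H2.
assert (Hws : exists ws : list X, forall i, List.In i L -> (exists s, g s = i) ->
          exists w, List.In w ws /\ g w = i).
{ clear H1 H2. induction L as [|i0 L IHL].
  - exists nil; intros i [].
  - destruct IHL as [ws Hws].
    destruct (classic (exists s, g s = i0)) as [[s Hs]|Hn].
    + exists (s :: ws). intros i [<-|Hi] Hex.
      * exists s; split; [left; reflexivity|exact Hs].
      * destruct (Hws i Hi Hex) as [w [Hw1 Hw2]]; exists w; split; [right|]; auto.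
    + exists ws. intros i [<-|Hi] Hex; [contradiction|exact (Hws i Hi Hex)]. }
destruct Hws as [ws Hws]. simpl. exists ws. intros z Hz.
destruct (Hws (g z) (H1 z Hz) (ex_intro _ z (erefl (g z)))) as [w [Hw Hgw]].
exists w; split; [exact Hw|]. apply H2; [exact (H1 z Hz)|symmetry; exact Hgw].
Qed.

Fixpoint inL (T : eqType) (x : T) (s : seq T) : x \in s -> List.In x s :=
  match s as s0 return x \in s0 -> List.In x s0 with
  | nil => fun H => False_ind _ (notF (etrans (esym (in_nil x)) H))
  | y :: s' => fun H => match orP (etrans (esym (in_cons y s' x)) H) with
              | or_introl E => or_introl (esym (eqP E))
              | or_intror E => or_intror (inL E)
              end
  end.

Definition zr (a b : int) : list int :=
  List.map (fun k : nat => (a + Posz k)%R) (iota 0 (absz (b - a)).+1).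

Lemma zr_in a b t : (a <= t)%R -> (t <= b)%R -> List.In t (zr a b).
Proof.
intros H1 H2. unfold zr.
apply List.in_map_iff. exists (absz (t - a)); split; [lia|]. apply inL. rewrite mem_iota. apply/andP; split; lia.
Qed.

Lemma cover_in (X : LinOrd) k (g : X -> idx k) (Hg : mono g) u v z :
  between u v z ->
  List.In (rank (g z)) (zr (rank (g u)) (rank (g v)) ++ zr (rank (g v)) (rank (g u)))%list.
Proof.
intros [[H1 H2]|[H1 H2]]; apply List.in_or_app; [left|right];
apply zr_in; exact (mono_rle Hg H1) || exact (mono_rle Hg H2).
Qed.

Lemma fiber_up (X : LinOrd) k (g : X -> idx k) (Hg : mono g) b (s t : X) :
  g s = g t ->
  (forall s' t' : fiber g (g s), @sim (fiber g (g s)) b s' t') -> @sim X b s t.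
Proof.
intros Heq Hs.
pose (s' := exist (fun x => g x = g s) s (erefl _) : fiber g (g s)).
pose (t' := exist (fun x => g x = g s) t (esym Heq) : fiber g (g s)).
exact (sim_sub_up (@fiber_convex X k g Hg (g s)) (Hs s' t')).
Qed.

Lemma sum_sim_kind (X : LinOrd) k (g : X -> idx k) a (Ha : ord_lt OZ a) (Hg : mono g)
  (Hf : forall i, exists b, ord_lt b a /\ forall s t : fiber g i, @sim (fiber g i) b s t) :
  forall u v : X, @sim X a u v.
Proof.
intros u v.
assert (Hmax : forall L : list int, exists e, ord_lt e a /\ forall i : idx k,
   List.In (rank i) L -> exists b, ord_le b e /\ forall s t : fiber g i, @sim (fiber g i) b s t).
{ induction L as [|r L IHL].
  - exists OZ; split; [exact Ha|intros i []].
  - destruct IHL as [e [He Hall]].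
    destruct (classic (exists i : idx k, rank i = r)) as [[i Hi]|Hn].
    + destruct (Hf i) as [b [Hb Hs]].
      destruct (ord_total e b) as [Heb|Hbe].
      * exists b; split; [exact Hb|]. intros j [Hj|Hj].
        -- rewrite <- Hi in Hj. symmetry in Hj. apply rank_inj in Hj. subst j. exists b; split; [apply ole_refl|exact Hs].
        -- destruct (Hall j Hj) as [b' [Hb' Hs']]. exists b'; split; [exact (ole_trans Hb' Heb)|exact Hs'].
      * exists e; split; [exact He|]. intros j [Hj|Hj].
        -- rewrite <- Hi in Hj. symmetry in Hj. apply rank_inj in Hj. subst j. exists b; split; [exact (olt_le Hbe)|exact Hs].
        -- exact (Hall j Hj).
    + exists e; split; [exact He|]. intros j [Hj|Hj]; [exfalso; apply Hn; exists j; symmetry; exact Hj|exact (Hall j Hj)]. }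
destruct (Hmax (zr (rank (g u)) (rank (g v)) ++ zr (rank (g v)) (rank (g u)))%list) as [e [He Hall]].
apply sim_le with (OS e); [constructor; exact He|].
apply (@sum_sim X int (fun z => rank (g z)) u v (zr (rank (g u)) (rank (g v)) ++ zr (rank (g v)) (rank (g u)))%list e).
- intros z Hz; exact (cover_in Hg Hz).
- intros s t Hin Heq. apply rank_inj in Heq. destruct (Hall _ Hin) as [b [Hb Hs]].
  exact (sim_le Hb (fiber_up Hg Heq Hs)).
Qed.

Fixpoint VD_sim a X (H : VD a X) {struct H} : forall u v : X, @sim X a u v.
Proof.
destruct H as [a X Ha Hsub | a X k g Ha Hmono Hf].
- intros u v. rewrite (Hsub u v). apply sim_refl.
- assert (IHf : forall i, exists b, ord_lt b a /\ forall s t : fiber g i, @sim (fiber g i) b s t).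
  { intro i. destruct (Hf i) as [b [Hb Hv]]. exists b; split; [exact Hb|exact (VD_sim _ _ Hv)]. }
  clear VD_sim. exact (sum_sim_kind Ha Hmono IHf).
Qed.

Lemma finsum_sim d (X : LinOrd) : finsumVD d X -> forall u v : X, @sim X (OS d) u v.
Proof.
intros [n [g [Hg Hf]]].
apply (sum_sim_kind (k := KFin n) (g := g)); [constructor; constructor|exact Hg|].
intro i. exists d; split; [constructor; apply ole_refl|]. exact (VD_sim (Hf i)).
Qed.

Definition pb (P : Prop) : bool :=
  if ClassicalEpsilon.excluded_middle_informative P then true else false.
Lemma pbP (P : Prop) : pb P = true <-> P.
Proof.
unfold pb; destruct (ClassicalEpsilon.excluded_middle_informative P) as [H|H]; split.
- intros _; exact H.
- intros _; reflexivity.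
- intro E; discriminate E.
- intro; contradiction.
Qed.
Lemma pbT (P : Prop) : pb P = true -> P.
Proof. exact (proj1 (pbP P)). Qed.
Lemma pbF (P : Prop) : pb P = false -> ~ P.
Proof. intros E HP. apply pbP in HP. rewrite HP in E. discriminate E. Qed.

Lemma exP (P : nat -> Prop) : (exists n, P n) -> exists n, pb (P n).
Proof. intros [n Hn]; exists n; apply pbP; exact Hn. Qed.

Definition least (P : nat -> Prop) : nat :=
  match ClassicalEpsilon.excluded_middle_informative (exists n, P n) with
  | left H => ex_minn (exP H)
  | right _ => 0
  end.

Lemma least_spec P : (exists n, P n) -> P (least P).
Proof.
intro H. unfold least. destruct (ClassicalEpsilon.excluded_middle_informative _) as [H'|H']; [|contradiction].
case: ex_minnP => m Hm _. exact (proj1 (pbP _) Hm).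
Qed.

Lemma least_min P n : P n -> (least P <= n)%N.
Proof.
intro Hn. unfold least. destruct (ClassicalEpsilon.excluded_middle_informative _) as [H'|H'].
- case: ex_minnP => m _ Hmin. apply Hmin. apply pbP; exact Hn.
- exfalso; apply H'; exists n; exact Hn.
Qed.

Lemma nlt_rle (X : LinOrd) (x y : X) : ~ rlt x y -> rle y x.
Proof.
intro H. destruct (rlt_total x y) as [H1|[H1|H1]]; [contradiction|left; symmetry; exact H1|right; exact H1].
Qed.

Lemma filter_le (T : Type) (f : T -> bool) (l : list T) : (length (List.filter f l) <= length l)%N.
Proof. induction l as [|a l IH]; simpl; [done|]. destruct (f a); simpl; lia. Qed.

Lemma filter_lt (T : Type) (f : T -> bool) (l : list T) x :
  List.In x l -> f x = false -> (length (List.filter f l) < length l)%N.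
Proof.
induction l as [|a l IH]; simpl; [intros []|]. intros [->|Hx] Hf.
- rewrite Hf. have := filter_le f l. lia.
- destruct (f a); simpl; [have := IH Hx Hf; lia|have := filter_le f l; lia].
Qed.

Section Cover.
Variable X : LinOrd.
Variable b : Ord.
Variable c : X.

Definition cov (z : X) (n : nat) : Prop :=
  exists l : list X, length l = n /\ forall t, between c z t -> exists w, List.In w l /\ @sim X b t w.
Definition Hc (z : X) : nat := least (cov z).

Lemma Hc_mono z z' : (exists n, cov z' n) -> between c z' z -> (Hc z <= Hc z')%N.
Proof.
intros Hex Hb. apply least_min. destruct (least_spec Hex) as [l [Hlen Hl]].
exists l; split; [exact Hlen|]. intros t Ht. apply Hl. exact (between_sub (between_l c z') Hb Ht).
Qed.

Lemma cover_fiber (Hall : forall z, exists n, cov z n) u v :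
  between c v u -> Hc u = Hc v -> @sim X b u v.
Proof.
intros Hb Heq. apply NNPP; intro Hn.
destruct (least_spec (Hall v)) as [l [Hlen Hl]].
pose (f := fun w => ~~ pb (@sim X b w v)).
assert (Hcov : cov u (length (List.filter f l))).
{ exists (List.filter f l); split; [reflexivity|].
  intros t Ht. have Htv : between c v t := between_sub (between_l c v) Hb Ht.
  destruct (Hl t Htv) as [w [Hw Hs]]. exists w; split; [|exact Hs].
  apply List.filter_In; split; [exact Hw|]. unfold f.
  destruct (pb (@sim X b w v)) eqn:E; [|reflexivity].
  exfalso; apply Hn. have E' : @sim X b w v := proj1 (pbP (@sim X b w v)) E. have Htv' := sim_trans Hs E'.
  exact (sim_conv Htv' (between_mid Ht Hb) (between_r t v)). }
assert (Hlt : (length (List.filter f l) < length l)%N).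
{ destruct (Hl v (between_r c v)) as [w [Hw Hs]]. apply (filter_lt (x := w)); [exact Hw|].
  unfold f. have E : pb (@sim X b w v) = true by apply pbP; exact (sim_sym Hs).
  rewrite E; reflexivity. }
have := least_min Hcov. unfold Hc in Heq. lia.
Qed.
End Cover.

Lemma glue (X : LinOrd) (c : X) (H : X -> nat)
  (Hm : forall z z', between c z' z -> (H z <= H z')%N) :
  exists g : X -> idx KZeta, mono g /\
    forall s t, g s = g t -> H s = H t /\ (between c t s \/ between c s t).
Proof.
exists (fun z => if pb (rlt z c) then Negz (H z) else Posz (H z)). split.
- intros x y Hxy.
  destruct (pb (rlt x c)) eqn:Ex; destruct (pb (rlt y c)) eqn:Ey.
  + apply pbT in Ex; apply pbT in Ey.
    have Hle : (H y <= H x)%N by apply Hm; right; split; [right; exact Hxy|right; exact Ey].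
    destruct (eqVneq (H x) (H y)) as [E|E]; [left; rewrite E; reflexivity|right; simpl; lia].
  + right; simpl; lia.
  + apply pbT in Ey. apply pbF in Ex. exfalso; exact (Ex (rlt_trans Hxy Ey)).
  + apply pbF in Ex. apply pbF in Ey. apply nlt_rle in Ex.
    have Hle : (H x <= H y)%N by apply Hm; left; split; [exact Ex|right; exact Hxy].
    destruct (eqVneq (H x) (H y)) as [E|E]; [left; rewrite E; reflexivity|right; simpl; lia].
- intros s t.
  destruct (pb (rlt s c)) eqn:Es; destruct (pb (rlt t c)) eqn:Et; intro E; try (simpl in E; lia).
  + apply pbT in Es; apply pbT in Et. split; [simpl in E; lia|].
    destruct (rle_total s t) as [H1|H1].
    * right; right; split; [exact H1|right; exact Et].
    * left; right; split; [exact H1|right; exact Es].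
  + apply pbF in Es; apply pbF in Et. apply nlt_rle in Es; apply nlt_rle in Et.
    split; [simpl in E; lia|].
    destruct (rle_total s t) as [H1|H1].
    * left; left; split; [exact Es|exact H1].
    * right; left; split; [exact Et|exact H1].
Qed.

Lemma VD_equiv a a' X : VD a X -> ord_le a a' -> ord_le a' a -> VD a' X.
Proof.
intros H Haa' Ha'a. destruct H as [a X Ha Hsub | a X k g Ha Hmono Hf].
- apply VD_base; [exact (ole_trans Ha'a Ha)|exact Hsub].
- apply (VD_sum (g := g)); [exact (olt_le_trans Ha Haa')|exact Hmono|].
  intro i; destruct (Hf i) as [b [Hb Hv]]; exists b; split; [exact (olt_le_trans Hb Haa')|exact Hv].
Qed.

Lemma VD_empty_sum a (X : LinOrd) : ord_lt OZ a -> ~ (exists c : X, True) -> VD a X.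
Proof.
intros Ha Hne. apply (VD_sum (k := KZeta) (g := fun _ => 0%R)); [exact Ha|intros x y _; left; reflexivity|].
intro i. exists OZ; split; [exact Ha|]. apply VD_base; [constructor|].
intros u; exfalso; apply Hne; exists (proj1_sig u); trivial.
Qed.

Lemma empty_VD0 (F : LinOrd) : ~ (exists c : F, True) -> VD OZ F.
Proof. intro Hne. apply VD_base; [constructor|]. intros u; exfalso; apply Hne; exists u; trivial. Qed.

Lemma fiber_eq (X : LinOrd) k (g : X -> idx k) i (s t : fiber g i) :
  g (proj1_sig s) = g (proj1_sig t).
Proof. rewrite (proj2_sig s) (proj2_sig t). reflexivity. Qed.

Lemma U a : forall X : LinOrd, (forall u v : X, @sim X a u v) -> VD a X.
Proof.
induction a as [|b IH|f IH]; intros X HX.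
- apply VD_base; [constructor|]. intros u v. exact (HX u v).
- destruct (classic (exists c : X, True)) as [[c _]|Hne];
    [|apply VD_empty_sum; [constructor; constructor|exact Hne]].
  have Hall : forall z, exists n, cov b c z n.
  { intro z. destruct (HX c z) as [l Hl]. exists (length l), l; split; [reflexivity|exact Hl]. }
  destruct (@glue X c (Hc b c) (fun z z' Hb => Hc_mono (Hall z') Hb)) as [g [Hg Hfib]].
  apply (VD_sum (k := KZeta) (g := g)); [constructor; constructor|exact Hg|].
  intro i. exists b; split; [constructor; apply ole_refl|]. apply IH.
  intros s t. apply sim_sub_down.
  destruct (Hfib _ _ (fiber_eq s t)) as [Heq [Hb|Hb]].
  + exact (cover_fiber Hall Hb Heq).
  + apply sim_sym. exact (cover_fiber Hall Hb (esym Heq)).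
- destruct (classic (exists m, ord_le (OL f) (f m))) as [[m Hm]|Hnm].
  + apply VD_equiv with (f m); [|exact (ole_OL (ole_refl (f m)))|exact Hm].
    apply IH. intros u v. exact (sim_le Hm (HX u v)).
  + destruct (lt0_or_le0 (OL f)) as [H0|H0];
      [|apply VD_base; [exact H0|]; intros u v; exact (sim_le H0 (HX u v))].
    destruct (classic (exists c : X, True)) as [[c _]|Hne];
      [|apply VD_empty_sum; [exact H0|exact Hne]].
    pose (P := fun z m => @sim X (f m) z c).
    have Hall : forall z, exists m, P z m.
    { intro z. destruct (HX z c) as [n Hn]. exists n; exact Hn. }
    have Hm : forall z z', between c z' z -> (least (P z) <= least (P z'))%N.
    { intros z z' Hb. apply least_min. have Hs := least_spec (Hall z').
      exact (sim_conv Hs (between_sym Hb) (between_r z' c)). }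
    destruct (glue Hm) as [g [Hg Hfib]].
    apply (VD_sum (k := KZeta) (g := g)); [exact H0|exact Hg|].
    intro i. destruct (classic (exists s : fiber g i, True)) as [[s0 _]|Hne];
      [|exists OZ; split; [exact H0|exact (empty_VD0 Hne)]].
    exists (f (least (P (proj1_sig s0)))). split.
    { destruct (ord_total (OL f) (f (least (P (proj1_sig s0))))) as [H1|H1];
        [exfalso; apply Hnm; eexists; exact H1|exact H1]. }
    apply IH. intros s t. apply sim_sub_down.
    destruct (Hfib _ _ (fiber_eq s s0)) as [Es _].
    destruct (Hfib _ _ (fiber_eq t s0)) as [Et _].
    have Hs := least_spec (Hall (proj1_sig s)). have Ht := least_spec (Hall (proj1_sig t)).
    unfold P in Hs, Ht. rewrite Es in Hs. rewrite Et in Ht.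
    exact (sim_trans Hs (sim_sym Ht)).
Qed.

Lemma finsum_from_cover (X : LinOrd) (b : Ord) (c : X) (Hcl : forall z, rle c z)
  (l0 : list X) (Hl0 : forall t : X, exists w, List.In w l0 /\ @sim X b t w) :
  finsumVD b X.
Proof.
pose (N := length l0).
have Hall : forall z, cov b c z N.
{ intro z. exists l0; split; [reflexivity|]. intros t _; exact (Hl0 t). }
have Hall' : forall z, exists n, cov b c z n by intro z; exists N; exact (Hall z).
have HN : forall z, (Hc b c z < N.+1)%N by intro z; have := least_min (Hall z); unfold Hc; lia.
exists N.+1. exists (fun z => @inord N (Hc b c z)). split.
- intros x y Hxy.
  have Hle : (Hc b c x <= Hc b c y)%N by apply Hc_mono; [exact (Hall' y)|left; split; [exact (Hcl x)|right; exact Hxy]].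
  destruct (eqVneq (Hc b c x) (Hc b c y)) as [E|E]; [left; rewrite E; reflexivity|].
  right; simpl. rewrite !inordK; [lia|exact (HN y)|exact (HN x)].
- intro i. apply U. intros s t. apply sim_sub_down.
  have E := fiber_eq s t.
  have E' : Hc b c (proj1_sig s) = Hc b c (proj1_sig t).
  { have := f_equal (@nat_of_ord _) E. rewrite !inordK; [auto|exact (HN _)|exact (HN _)]. }
  destruct (rle_total (proj1_sig s) (proj1_sig t)) as [H1|H1].
  + exact (cover_fiber Hall' (or_introl (conj (Hcl _) H1)) E').
  + apply sim_sym. exact (cover_fiber Hall' (or_introl (conj (Hcl _) H1)) (esym E')).
Qed.

Lemma many_rats (p q : rat) : (p < q)%R -> forall n, exists S : list rat, length S = n /\
  List.NoDup S /\ forall r, List.In r S -> (p <= r)%R /\ (r <= q)%R.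
Proof.
intros Hpq n.
have Hst : exists (S : list rat) (m : rat), length S = n /\ List.NoDup S /\ (p < m)%R /\ (m <= q)%R /\
   forall r, List.In r S -> (m <= r)%R /\ (r <= q)%R.
{ induction n as [|n IH].
  - exists nil, q. split; [reflexivity|split; [constructor|split; [exact Hpq|split; [lra|intros r []]]]].
  - destruct IH as [S [m [Hlen [Hnd [Hpm [Hmq HS]]]]]].
    exists (((p + m) / 2)%R :: S), ((p + m) / 2)%R. split; [simpl; rewrite Hlen; reflexivity|].
    split.
    + constructor; [|exact Hnd]. intro Hin. destruct (HS _ Hin) as [H1 _]. lra.
    + split; [lra|split; [lra|]]. intros r [<-|Hr]; [split; lra|].
      destruct (HS _ Hr) as [H1 H2]; split; lra. }
destruct Hst as [S [m [Hlen [Hnd [Hpm [Hmq HS]]]]]].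
exists S; split; [exact Hlen|split; [exact Hnd|]]. intros r Hr. destruct (HS r Hr); split; lra.
Qed.

Lemma SC (X : LinOrd) (f : rat -> X) (Hf : forall p q : rat, (p < q)%R -> rlt (f p) (f q)) :
  forall a p q, (p < q)%R -> ~ @sim X a (f p) (f q).
Proof.
have Hfle : forall p q : rat, (p <= q)%R -> rle (f p) (f q).
{ intros p q H. rewrite le_eqVlt in H. destruct (orP H) as [E|E].
  - left; rewrite (eqP E); reflexivity.
  - right; exact (Hf _ _ E). }
induction a as [|a IH|h IH]; intros p q Hpq Hs.
- simpl in Hs. have := Hf _ _ Hpq. rewrite Hs. apply rlt_irr.
- destruct Hs as [l Hl].
  have Hreps : forall S : list rat, List.NoDup S -> (forall r, List.In r S -> (p <= r)%R /\ (r <= q)%R) ->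
    exists ws : list X, length ws = length S /\ List.NoDup ws /\ List.incl ws l /\
      forall w, List.In w ws -> exists r, List.In r S /\ @sim X a (f r) w.
  { induction S as [|r S IHS]; intros Hnd HS.
    - exists nil. split; [reflexivity|split; [constructor|split; [intros ? []|intros ? []]]].
    - apply List.NoDup_cons_iff in Hnd. destruct Hnd as [Hr Hnd].
      destruct IHS as [ws [Hlen [Hndw [Hinc Hws]]]]; [exact Hnd|intros r' Hr'; apply HS; right; exact Hr'|].
      destruct (HS r (or_introl erefl)) as [H1 H2].
      destruct (Hl (f r)) as [w [Hw Hsw]]; [left; split; [exact (Hfle _ _ H1)|exact (Hfle _ _ H2)]|].
      exists (w :: ws). split; [simpl; rewrite Hlen; reflexivity|split; [|split]].
      + constructor; [|exact Hndw]. intro Hin. destruct (Hws w Hin) as [r' [Hr' Hs']].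
        have Hrr : @sim X a (f r) (f r') := sim_trans Hsw (sim_sym Hs').
        destruct (ltgtP r r') as [E|E|E].
        * exact (IH _ _ E Hrr).
        * exact (IH _ _ E (sim_sym Hrr)).
        * apply Hr. rewrite E. exact Hr'.
      + intros w' [<-|Hw']; [exact Hw|exact (Hinc _ Hw')].
      + intros w' [<-|Hw'].
        * exists r; split; [left; reflexivity|exact Hsw].
        * destruct (Hws w' Hw') as [r' [Hr' Hs']]. exists r'; split; [right; exact Hr'|exact Hs']. }
  destruct (many_rats Hpq (length l).+1) as [S [HlenS [HndS HS]]].
  destruct (Hreps S HndS HS) as [ws [Hlen [Hndw [Hinc _]]]].
  have := List.NoDup_incl_length Hndw Hinc. rewrite Hlen HlenS. lia.
- destruct Hs as [n Hn]. exact (IH n p q Hpq Hn).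
Qed.

Theorem lemma4p15 (A : LinOrd) (alpha : Ord) :
  countableLO A ->
  (exists g, isFC A g /\ ord_lt alpha g) ->
  (exists x y : A, rle x y /\ scattered (intervalLO x y) /\
                   isFC (intervalLO x y) (OS alpha)) /\
  (exists x y : A, rle x y /\ scattered (intervalLO x y) /\
                   isVDstar (intervalLO x y) alpha).
Proof.
intros _ [g [[Hstab Hmin] Hag]].
have Hxy0 : exists x y : A, @sim A (OS alpha) x y /\ ~ @sim A alpha x y.
{ apply NNPP; intro Hn.
  have Hst : forall x y : A, @sim A (OS alpha) x y -> @sim A alpha x y.
  { intros x y Hs. apply NNPP; intro Hn'. apply Hn; exists x, y; split; auto. }
  have Hall : forall b (x y : A), @sim A b x y -> @sim A alpha x y.
  { induction b as [|b IH|f IH]; intros x y Hs.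
    - simpl in Hs; subst; apply sim_refl.
    - apply Hst. exact (sim_mono_S IH Hs).
    - destruct Hs as [n Hn']; exact (IH n x y Hn'). }
  have Hsa : stabilizes A alpha.
  { intros b Hb x y; split; [apply Hall|apply sim_le; exact Hb]. }
  have Hga := Hmin alpha Hsa. exact (olt_irrefl (olt_le_trans Hag Hga)). }
destruct Hxy0 as [x0 [y0 [Hs0 Hn0]]].
have [x [y [Hxy [Hs Hn]]]] : exists x y : A, rle x y /\ @sim A (OS alpha) x y /\ ~ @sim A alpha x y.
{ destruct (rle_total x0 y0) as [H|H]; [exists x0, y0|exists y0, x0]; repeat split; auto.
  - exact (sim_sym Hs0).
  - intro H'; apply Hn0; exact (sim_sym H'). }
pose (P := fun z => rle x z /\ rle z y).
change (intervalLO x y) with (subLO P).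
pose (x' := exist P x (conj (rle_refl x) Hxy) : subLO P).
pose (y' := exist P y (conj Hxy (rle_refl y)) : subLO P).
have HallI : forall u v : subLO P, @sim (subLO P) (OS alpha) u v.
{ intros u v. apply sim_sub_down. apply (sim_conv Hs); left; [exact (proj2_sig u)|exact (proj2_sig v)]. }
have HnI : ~ @sim (subLO P) alpha x' y'.
{ intro H. apply Hn. exact (sim_sub_up (@interval_convex A x y) H). }
have Hscat : scattered (subLO P).
{ intros [f Hf]. exact (SC Hf (a := OS alpha) ltr01 (HallI _ _)). }
split.
- exists x, y; split; [exact Hxy|split; [exact Hscat|split]].
  + intros b Hb u v; split; intro H.
    * exact (HallI u v).
    * exact (sim_le Hb H).
  + intros d Hd. pose (B := OL (fun n => match n with 0 => d | _ => OS alpha end)).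
    have HdB : ord_le d B by apply (ole_OL (n := 0)); exact (ole_refl d).
    have HaB : ord_le (OS alpha) B by apply (ole_OL (n := 1)); exact (ole_refl _).
    have H1 : @sim (subLO P) B x' y' := sim_le HaB (HallI x' y').
    have H2 : @sim (subLO P) d x' y' := proj1 (Hd B HdB x' y') H1.
    destruct (ord_total d alpha) as [H3|H3].
    * exfalso; apply HnI; exact (sim_le H3 H2).
    * constructor; exact H3.
- exists x, y; split; [exact Hxy|split; [exact Hscat|split]].
  + destruct (HallI x' y') as [l Hl].
    refine (@finsum_from_cover (subLO P) alpha x' _ l _).
    * intro z. apply rle_sub. exact (proj1 (proj2_sig z)).
    * intro t. apply Hl. left; split; apply rle_sub; [exact (proj1 (proj2_sig t))|exact (proj2 (proj2_sig t))].
  + intros d Hd. have H1 := finsum_sim Hd x' y'.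
    destruct (ord_total alpha d) as [H|H]; [exact H|].
    exfalso. apply HnI. exact (sim_le (ole_S H) H1).
Qed.
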